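(* Let $p$ be an odd prime and $a,s$ natural numbers with $a<p$. Let $\omega=\{\omega_1,\ldots,\omega_{sp}\}$ be a set partition of $\{1,\ldots,asp\}$ into $sp$ sets of size $a$. Then $\omega$ is fixed by $R_{as}$ if and only if there exist a set partition $\delta=\{\delta_1,\ldots,\delta_s\}$ of $\{1,\ldots,as\}$ into $s$ sets of size $a$ and $s$ sets $A_1,\ldots,A_s$ of $\omega$ such that for all $i\in\{1,\ldots,s\}$ and $j\in\{1,\ldots,as\}$, $$|A_i\cap\mathcal{O}_j|=\begin{cases}1 & \text{if } j\in\delta_i,\\ 0 & \text{if } j\notin\delta_i,\end{cases}$$ and $$\omega=\{A_1,A_1\sigma,\ldots,A_1\sigma^{p-1},A_2,\ldots,A_2\sigma^{p-1},\ldots,A_s,\ldots,A_s\sigma^{p-1}\}.$$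
   Context: For $j\geq 1$ let $z_j=(p(j-1)+1,p(j-1)+2,\ldots,pj)$, a $p$-cycle, and $\mathcal{O}_j=\{p(j-1)+1,\ldots,pj\}$ its support. Let $\sigma=z_1z_2\cdots z_{as}\in S_{asp}$ and $R_{as}=\langle\sigma\rangle$. Permutations act on the right, and $S_{asp}$ acts on set partitions of $\{1,\ldots,asp\}$ by acting on each element. *)

(* Defs.v *)
From mathcomp Require Import all_boot all_fingroup.
From mathcomp Require Import zify.
Set Implicit Arguments. Unset Strict Implicit. Unset Printing Implicit Defensive.

(* Points 1..m*p of the paper are represented 0-indexed by 'I_(m*p):
   paper point x+1  <->  ordinal x.  Block O_j (j = 1..m) corresponds to
   ordinal j-1 : 'I_m and is { x | x %/ p = j-1 }. *)

Lemma zcyc_lt m p (x : 'I_(m * p)) : (x %/ p) * p + (x %% p).+1 %% p < m * p.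
Proof.
have xlt := ltn_ord x.
have p0 : 0 < p.
  by move: xlt; move: (nat_of_ord x) => n; case: (posnP p) => // ->; rewrite muln0.
have q : x %/ p < m by rewrite ltn_divLR.
have r : (x %% p).+1 %% p < p by rewrite ltn_mod.
have : (x %/ p).+1 * p <= m * p by rewrite leq_mul2r q orbT.
rewrite mulSn. lia.
Qed.

(* the map x -> next point in the same block (cyclically), i.e. z_1 ... z_m *)
Definition zcyc_fun m p (x : 'I_(m * p)) : 'I_(m * p) := Ordinal (zcyc_lt x).

Lemma zcyc_inj m p : injective (@zcyc_fun m p).
Proof.
move=> x y /(congr1 val) /= E.
have p0 : 0 < p.
  by move: (ltn_ord x); move: (nat_of_ord x) => n; case: (posnP p) => // ->; rewrite muln0.
have Hd z : ((z %/ p) * p + (z %% p).+1 %% p) %/ p = z %/ p.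
  by rewrite divnMDl // [X in _ + X]divn_small ?addn0 // ltn_mod.

have Hm z : ((z %/ p) * p + (z %% p).+1 %% p) %% p = (z %% p).+1 %% p.
  by rewrite modnMDl modn_mod.
have Eq : x %/ p = y %/ p by rewrite -(Hd x) -(Hd y) E.
have Er : (x %% p).+1 %% p = (y %% p).+1 %% p by rewrite -(Hm x) -(Hm y) E.
have Er' : x %% p = y %% p.
  move: Er; rewrite -[(x %% p).+1]addn1 -[(y %% p).+1]addn1 => /eqP; rewrite eqn_modDr => /eqP.
  by rewrite !modn_mod.
apply: val_inj => /=; by rewrite (divn_eq x p) (divn_eq y p) Eq Er'.
Qed.

Definition sigma_perm m p : {perm 'I_(m * p)} := perm (@zcyc_inj m p).

Definition R_grp m p : {group {perm 'I_(m * p)}} := <[sigma_perm m p]>%G.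

(* the orbit/support O_j, for j : 'I_m (paper's index j+1) *)
Definition Oblock m p (j : 'I_m) : {set 'I_(m * p)} :=
  [set x : 'I_(m * p) | x %/ p == j].

Definition setpart_act (T : finType) (P : {set {set T}}) (g : {perm T}) :
  {set {set T}} := [set (fun x => g x) @: (B : {set T}) | B in P].

Definition setpart_k_a (T : finType) (P : {set {set T}}) (D : {set T})
  (k a : nat) : bool :=
  [&& partition P D, #|P| == k & [forall B in P, #|B| == a]].

(* Main.v *)
Require Import Defs.
From mathcomp Require Import all_boot all_fingroup.
From mathcomp Require Import zify.
Set Implicit Arguments. Unset Strict Implicit. Unset Printing Implicit Defensive.

Lemma triv_eq (T : finType) (P : {set {set T}}) B1 B2 x :
  trivIset P -> B1 \in P -> B2 \in P -> x \in B1 -> x \in B2 -> B1 = B2.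
Proof.
move=> /trivIsetP tP h1 h2 x1 x2; apply/eqP; apply/negPn/negP => ne.
by move: (disjointFr (tP _ _ h1 h2 ne) x1); rewrite x2.
Qed.

Lemma mod_cancel p d m1 m2 : prime p -> 0 < d < p -> m1 < p -> m2 < p ->
  d * m1 = d * m2 %[mod p] -> m1 = m2.
Proof.
move=> pr /andP[d0 dp].
wlog le: m1 m2 / m2 <= m1.
  move=> W h1 h2 E; case: (leqP m2 m1) => h; first exact: W.
  by apply/esym/W => //; apply: ltnW.
move=> h1 h2 /eqP E.
rewrite eqn_mod_dvd ?leq_mul2l ?le ?orbT // -mulnBr Euclid_dvdM // in E.
case/orP: E => E; first by move: (dvdn_leq d0 E); lia.
case: (posnP (m1 - m2)) => z; first lia.
by move: (dvdn_leq z E); lia.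
Qed.

Lemma blk_lt n p (x : 'I_(n * p)) : x %/ p < n.
Proof.
have := ltn_ord x; move: (nat_of_ord x) => y.
case: (posnP p) => [->|pp]; first by rewrite muln0.
by rewrite ltn_divLR.
Qed.

Definition blk n p (x : 'I_(n * p)) : 'I_n := Ordinal (blk_lt x).

Section Sig.
Variables n p : nat.
Hypothesis p0 : 0 < p.
Local Notation T := 'I_(n * p).
Local Notation sg := (sigma_perm n p).

Definition act k (B : {set T}) : {set T} := (fun x => (sg ^+ k)%g x) @: B.

Lemma sigmaE (x : T) : val (sg x) = x %/ p * p + (x %% p).+1 %% p.
Proof. by rewrite /sigma_perm permE. Qed.

Lemma sigmaXE k (x : T) : val ((sg ^+ k)%g x) = x %/ p * p + (x %% p + k) %% p.
Proof.
elim: k => [|k IH]; first by rewrite expg0 perm1 addn0 modn_mod -divn_eq.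
rewrite expgSr permM sigmaE IH.
rewrite divnMDl // (divn_small (ltn_pmod _ p0)) addn0.
by rewrite modnMDl modn_mod -addn1 modnDml addn1 addnS.
Qed.

Lemma blk_sg k (x : T) : blk ((sg ^+ k)%g x) = blk x.
Proof.
apply: val_inj => /=; rewrite sigmaXE divnMDl //.
by rewrite (divn_small (ltn_pmod _ p0)) addn0.
Qed.

Lemma sg_p : (sg ^+ p = 1)%g.
Proof.
apply/permP => x; apply: val_inj.
by rewrite sigmaXE perm1 modnDr modn_mod -divn_eq.
Qed.

Lemma sg_block (x y : T) : blk x = blk y -> exists k : 'I_p, (sg ^+ k)%g x = y.
Proof.
move/(congr1 val) => /= E.
have kl : (y %% p + (p - x %% p)) %% p < p by rewrite ltn_mod.
exists (Ordinal kl); apply: val_inj; rewrite sigmaXE /= E.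
rewrite modnDmr addnA [X in X %% p](_ : _ = y %% p + p).
  by rewrite modnDr modn_mod -divn_eq.
have := ltn_pmod x p0; lia.
Qed.

Lemma act_add k l B : act k (act l B) = act (l + k) B.
Proof.
rewrite /act -imset_comp; apply: eq_imset => x /=.
by rewrite expgD permM.
Qed.

Lemma act_mod k B : act (k %% p) B = act k B.
Proof. by rewrite /act (expg_mod _ sg_p). Qed.

Lemma act0 B : act 0 B = B.
Proof. by rewrite /act expg0 -[RHS]imset_id; apply: eq_imset => x; rewrite perm1. Qed.

Lemma sg_inj k : injective (fun x : T => (sg ^+ k)%g x).
Proof. exact: perm_inj. Qed.

Lemma card_act k B : #|act k B| = #|B|.
Proof. by rewrite card_imset //; apply: sg_inj. Qed.

End Sig.
Arguments act : clear implicits.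

Theorem lemma3p2 (p a s : nat) (omega : {set {set 'I_(a * s * p)}}) :
  prime p -> odd p -> a < p ->
  setpart_k_a omega [set: 'I_(a * s * p)] (s * p) a ->
  ((forall g, g \in R_grp (a * s) p -> setpart_act omega g = omega) <->
   exists (delta : 'I_s -> {set 'I_(a * s)}) (A : 'I_s -> {set 'I_(a * s * p)}),
     [/\ setpart_k_a [set delta i | i : 'I_s] [set: 'I_(a * s)] s a,
         forall i, A i \in omega,
         forall i j, #|A i :&: Oblock p j| = (j \in delta i) &
         omega = [set (fun x => (sigma_perm (a * s) p ^+ k)%g x) @: A i
                   | i : 'I_s, k : 'I_p]]).
Proof.
move=> pr_p _ ltap /and3P[/and3P[/eqP covO tI nz0] /eqP cardO /forallP sizeO].
have p0 : 0 < p by apply: prime_gt0.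
have sizeB : forall B, B \in omega -> #|B| = a.
  by move=> B Bin; move: (sizeO B); rewrite Bin => /eqP.
have nzB : forall B, B \in omega -> exists x, x \in B.
  move=> B Bin; apply/set0Pn; apply: contraNneq nz0 => <-; exact: Bin.
have actE : forall k (B : {set 'I_(a * s * p)}), (fun x => (sigma_perm (a * s) p ^+ k)%g x) @: B = act (a * s) p k B by [].
split.
- move=> H.
  have inv : forall k (B : {set 'I_(a * s * p)}), B \in omega -> act (a * s) p k B \in omega.
    move=> k B Bin; have := H _ (mem_cycle (sigma_perm (a * s) p) k).
    by move=> E; rewrite -E; apply: imset_f.
  have noFix : forall (C : {set 'I_(a * s * p)}) d, C \in omega -> 0 < d < p -> act (a * s) p d C = C -> False.
    move=> C d Cin /andP[d0 dp] E.
    have Em : forall m, act (a * s) p (d * m) C = C.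
      elim=> [|m IH]; first by rewrite muln0 act0.
      by rewrite mulnS -act_add E IH.
    case: (nzB _ Cin) => x xC.
    pose F := [set (sigma_perm (a * s) p ^+ (d * m))%g x | m : 'I_p].
    have FC : F \subset C.
      apply/subsetP => y /imsetP[m _ ->].
      by rewrite -(Em m); apply: imset_f.
    have cF : #|F| = p.
      rewrite card_imset ?card_ord // => m1 m2 /(congr1 val).
      rewrite !sigmaXE // => /eqP; rewrite eqn_add2l => /eqP E2.
      apply: val_inj; apply: (@mod_cancel p d) => //; [by rewrite d0|exact: ltn_ord|exact: ltn_ord|].
      by move/eqP: E2; rewrite eqn_modDl => /eqP.
    by move: (subset_leq_card FC); rewrite cF sizeB //; lia.
  have actinj : forall (B : {set 'I_(a * s * p)}), B \in omega ->
      forall k l : 'I_p, act (a * s) p k B = act (a * s) p l B -> k = l.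
    move=> B Bin.
    have W : forall k l : 'I_p, k < l -> act (a * s) p k B = act (a * s) p l B -> False.
      move=> k l kl E; apply: (noFix (act (a * s) p k B) (l - k)).
      - exact: inv.
      - by have := ltn_ord l; lia.
      - by rewrite act_add subnKC ?(ltnW kl) // E.
    move=> k l E; case: (ltngtP k l) => h.
    - by case: (W _ _ h E).
    - by case: (W _ _ h (esym E)).
    - exact: val_inj.
  pose Orb (B : {set 'I_(a * s * p)}) := [set act (a * s) p k B | k : 'I_p].
  have ord0p : 0 < p := p0.
  pose k0 := Ordinal ord0p.
  have inOrb : forall B, B \in Orb B.
    by move=> B; apply/imsetP; exists k0 => //; rewrite act0.
  have Orb_sub : forall B, B \in omega -> Orb B \subset omega.
    by move=> B Bin; apply/subsetP => C /imsetP[k _ ->]; apply: inv.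
  have card_Orb : forall B, B \in omega -> #|Orb B| = p.
    by move=> B Bin; rewrite card_imset ?card_ord // => k l; apply: actinj.
  have Orb_act : forall B k, B \in omega -> Orb (act (a * s) p k B) = Orb B.
    move=> B k Bin; apply/eqP; rewrite eqEcard (card_Orb _ (inv k B Bin)) (card_Orb _ Bin) leqnn andbT.
    apply/subsetP => C /imsetP[l _ ->]; rewrite act_add -act_mod //.
    by apply/imsetP; exists (Ordinal (ltn_pmod (k + l) p0)).
  have Orb_eq : forall B C, B \in omega -> C \in Orb B -> Orb C = Orb B.
    by move=> B C Bin /imsetP[k _ ->]; apply: Orb_act.
  pose OS := [set Orb B | B in omega].
  have partOS : partition OS omega.
    apply/and3P; split.
    - apply/eqP/eqP; rewrite eqEsubset; apply/andP; split.
        by apply/bigcupsP => O /imsetP[B Bin ->]; apply: Orb_sub.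
      apply/subsetP => B Bin; apply/bigcupP; exists (Orb B); last exact: inOrb.
      exact: imset_f.
    - apply/trivIsetP => O1 O2 /imsetP[B1 B1in ->] /imsetP[B2 B2in ->] ne.
      rewrite -setI_eq0; apply/set0Pn => -[C /setIP[C1 C2]].
      by move: ne; rewrite -(Orb_eq _ _ B1in C1) -(Orb_eq _ _ B2in C2) eqxx.
    - apply/imsetP => -[B Bin E].
      by move: (inOrb B); rewrite -E inE.
  have cOS : #|OS| = s.
    have := card_uniform_partition _ partOS.
    rewrite cardO => /(_ p) E; apply/eqP; rewrite -(eqn_pmul2r p0) E //.
    by move=> O /imsetP[B Bin ->]; apply: card_Orb.
  pose e (i : 'I_s) : {set {set 'I_(a * s * p)}} := enum_val (cast_ord (esym cOS) i).
  have eOS : forall i, e i \in OS by move=> i; apply: enum_valP.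
  have e_inj : injective e by move=> i j /enum_val_inj /cast_ord_inj.
  pose A (i : 'I_s) := odflt set0 [pick B in omega | Orb B == e i].
  have Aspec : forall i, A i \in omega /\ Orb (A i) = e i.
    move=> i; rewrite /A; case: pickP => [B /andP[Bin /eqP E] | none] //=.
    case/imsetP: (eOS i) => B Bin E; move: (none B).
    by rewrite Bin -E eqxx.
  have AinO : forall i, A i \in omega by move=> i; case: (Aspec i).
  have Aeq : forall i j, Orb (A i) = Orb (A j) -> i = j.
    by move=> i j; rewrite (proj2 (Aspec i)) (proj2 (Aspec j)); apply: e_inj.
  have omE : omega = [set act (a * s) p k (A i) | i : 'I_s, k : 'I_p].
    apply/eqP; rewrite eqEsubset; apply/andP; split; last first.
      by apply/subsetP => C /imset2P[i k _ _ ->]; apply: inv.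
    apply/subsetP => C Cin.
    have OC : Orb C \in OS := imset_f _ Cin.
    pose i := cast_ord cOS (enum_rank_in OC (Orb C)).
    have ei : e i = Orb C by rewrite /e /i cast_ordK enum_rankK_in.
    have : C \in Orb (A i) by rewrite (proj2 (Aspec i)) ei inOrb.
    case/imsetP => k _ ->; by apply/imset2P; exists i k.
  have inOb : forall x (j : 'I_(a * s)), (x \in Oblock p j) = (blk x == j).
    by move=> x j; rewrite /Oblock inE -val_eqE.
  have one_per : forall i x y, x \in A i -> y \in A i -> blk x = blk y -> x = y.
    move=> i x y xA yA bxy; case: (sg_block p0 bxy) => k E.
    have yact : y \in act (a * s) p k (A i) by rewrite -E; apply: imset_f.
    have E2 := triv_eq tI (inv k _ (AinO i)) (AinO i) yact yA.
    have : act (a * s) p k (A i) = act (a * s) p k0 (A i) by rewrite E2 act0.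
    move/(actinj _ (AinO i)) => kk; move: E; rewrite kk /= expg0 perm1 //.
  have same_i : forall i i' x y, x \in A i -> y \in A i' -> blk x = blk y -> i = i'.
    move=> i i' x y xA yA bxy; case: (sg_block p0 bxy) => k E.
    have yact : y \in act (a * s) p k (A i) by rewrite -E; apply: imset_f.
    have E2 := triv_eq tI (inv k _ (AinO i)) (AinO i') yact yA.
    by apply: Aeq; rewrite -E2 Orb_act.
  pose delta (i : 'I_s) := [set blk x | x in A i].
  have card_delta : forall i, #|delta i| = a.
    move=> i; rewrite card_in_imset; first exact: sizeB.
    exact: (one_per i).
  have inter : forall i j, #|A i :&: Oblock p j| = (j \in delta i).
    move=> i j; case: (boolP (j \in delta i)) => [/imsetP[x xA ->] | nj].
    - rewrite (_ : _ :&: _ = [set x]) ?cards1 //.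
      apply/setP => y; rewrite in_setI inOb in_set1.
      apply/andP/eqP.
        by case=> yA /eqP b; apply: (one_per i y x yA xA b).
      by move=> ->; rewrite xA eqxx.
    - rewrite (_ : _ :&: _ = set0) ?cards0 //.
      apply/setP => y; rewrite in_setI inOb in_set0.
      apply/negbTE/andP => -[yA /eqP b]; move: nj; by rewrite -b imset_f.
  have ne_delta : forall i, exists j, j \in delta i.
    by move=> i; case: (nzB _ (AinO i)) => x xA; exists (blk x); apply: imset_f.
  have cov : forall j : 'I_(a * s), exists i, j \in delta i.
    move=> j.
    have jp : j * p < a * s * p by rewrite ltn_pmul2r // ltn_ord.
    pose x : 'I_(a * s * p) := Ordinal jp.
    have bx : blk x = j by apply: val_inj; rewrite /= mulnK.
    have : x \in cover omega by rewrite covO in_setT.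
    case/bigcupP => C; rewrite omE => /imset2P[i k _ _ ->] /imsetP[y yA xy].
    exists i; rewrite -bx xy blk_sg //; exact: imset_f.
  exists delta, A; split => //.
  apply/and3P; split.
  - apply/and3P; split.
    + apply/eqP/setP => j; rewrite inE; case: (cov j) => i ji.
      by apply/bigcupP; exists (delta i) => //; apply: imset_f.
    + apply/trivIsetP => D1 D2 /imsetP[i _ ->] /imsetP[i' _ ->] ne.
      rewrite -setI_eq0; apply/set0Pn => -[j /setIP[j1 j2]].
      case/imsetP: j1 => x xA bx; case/imsetP: j2 => y yA b2.
      by move: ne; rewrite (same_i i i' x y xA yA) ?eqxx // -bx -b2.
    + by apply/imsetP => -[i _ E]; case: (ne_delta i) => j; rewrite -E inE.
  - apply/eqP; rewrite card_imset ?card_ord // => i i' E.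
    case: (ne_delta i) => j ji; have ji' : j \in delta i' by rewrite -E.
    case/imsetP: ji => x xA bx; case/imsetP: ji' => y yA b2.
    by apply: (same_i i i' x y xA yA); rewrite -bx -b2.
  - apply/forallP => D; apply/implyP => /imsetP[i _ ->]; by rewrite card_delta.
- move=> [delta [A [_ AinO _ omE]]] g /cycleP[m ->].
  have sub : setpart_act omega (sigma_perm (a * s) p ^+ m)%g \subset omega.
    apply/subsetP => C /imsetP[B Bin ->]; move: Bin; rewrite omE.
    case/imset2P => i k _ _ ->.
    change (act (a * s) p m (act (a * s) p k (A i)) \in
      [set act (a * s) p k (A i) | i : 'I_s, k : 'I_p]).
    rewrite act_add -act_mod //.
    by apply/imset2P; exists i (Ordinal (ltn_pmod (k + m) p0)).
  apply/eqP; rewrite eqEcard sub /= /setpart_act card_imset //.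
  by apply: imset_inj; apply: perm_inj.
Qed.
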